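(* Let $a>0$, $D_L>0$, $\ell>0$, and let $v_e:[0,\ell]\to\mathbb R$ be continuous with $a<v_e(x)<2a$ for all $x\in[0,\ell]$. For $\lambda\in\mathbb C$ with $\mathrm{Re}(\lambda)\ge0$ define $$f(x,\lambda)=\frac{(\lambda+1)\,v_e(x)^2}{\lambda-1+2a/v_e(x)}+\lambda .$$ Then $f(x,\lambda)$ is well defined (the denominator is nonzero) and $\mathrm{Re}\,f(x,\lambda)>0$ for all $x\in[0,\ell]$. Moreover, if $\eta\in C^2((0,\ell))\cap C^1([0,\ell])$ is a complex-valued solution of $$D_L\,\eta_{xx}-f(x,\lambda)\,\eta=0\ \text{ on }(0,\ell),\qquad \eta(0)=0,\quad \eta_x(\ell)=0,$$ then $\eta\equiv0$ on $[0,\ell]$; in particular $\eta_x(0)=0$.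
   Context: This is the outer eigenvalue problem arising in the linear stability analysis of Schnakenberg spike equilibria, where $v_e$ is the outer steady-state activator profile. *)

(* Defs.v *)
From Coquelicot Require Import Coquelicot.
From Stdlib Require Import Reals.

Open Scope R_scope.

Definition Icc (l x : R) : Prop := 0 <= x <= l.

Definition cont_on_Icc {V : UniformSpace} (l : R) (g : R -> V) : Prop :=
  forall x, Icc l x -> filterlim g (within (Icc l) (locally x)) (locally (g x)).

Definition fdenom (a : R) (ve : R -> R) (x : R) (lam : Complex.C) : Complex.C :=
  (lam - RtoC 1 + RtoC (2 * a / ve x))%C.

Definition fval (a : R) (ve : R -> R) (x : R) (lam : Complex.C) : Complex.C :=
  ((lam + RtoC 1) * RtoC (ve x ^ 2) / fdenom a ve x lam + lam)%C.

(* Main.v *)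
Require Import Defs.
From Coquelicot Require Import Coquelicot.
From Stdlib Require Import Reals Lra Psatz.
Open Scope R_scope.
Lemma lim_fst (F : (R -> Prop) -> Prop) (FF : Filter F) (f : R -> Complex.C) z :
  filterlim f F (locally z) -> filterlim (fun t => fst (f t)) F (locally (fst z)).
Proof.
  intros H. destruct z as [z1 z2].
  eapply filterlim_comp. exact H.
  apply (@continuous_fst R_UniformSpace R_UniformSpace).
Qed.
Lemma lim_snd (F : (R -> Prop) -> Prop) (FF : Filter F) (f : R -> Complex.C) z :
  filterlim f F (locally z) -> filterlim (fun t => snd (f t)) F (locally (snd z)).
Proof.
  intros H. destruct z as [z1 z2].
  eapply filterlim_comp. exact H.
  apply (@continuous_snd R_UniformSpace R_UniformSpace).
Qed.
Lemma lim_mult (F : (R -> Prop) -> Prop) (FF : Filter F) (f g : R -> R) a b :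
  filterlim f F (locally a) -> filterlim g F (locally b) ->
  filterlim (fun t => f t * g t) F (locally (a * b)).
Proof.
  intros H1 H2. eapply filterlim_comp_2; [exact H1|exact H2|].
  apply (@filterlim_mult R_AbsRing a b).
Qed.
Lemma lim_plus (F : (R -> Prop) -> Prop) (FF : Filter F) (f g : R -> R) a b :
  filterlim f F (locally a) -> filterlim g F (locally b) ->
  filterlim (fun t => f t + g t) F (locally (a + b)).
Proof.
  intros H1 H2. eapply filterlim_comp_2; [exact H1|exact H2|].
  apply (@filterlim_plus R_AbsRing R_NormedModule a b).
Qed.

Lemma approx (h : R -> R) l x0 : 0 < l -> Icc l x0 ->
  filterlim h (within (Icc l) (locally x0)) (locally (h x0)) ->
  forall e d, 0 < e -> 0 < d -> exists t, 0 < t < l /\ Rabs (t - x0) < d /\ Rabs (h t - h x0) < e.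
Proof.
  intros hl Hx H e d he hd.
  apply filterlim_locally with (eps := mkposreal e he) in H.
  destruct H as [del Hdel].
  set (s := Rmin (Rmin del d) (l/2) / 2).
  assert (Hs1 : 0 < s).
  { unfold s. apply Rdiv_lt_0_compat; [|lra]. apply Rmin_glb_lt; [apply Rmin_glb_lt|]; try lra. apply cond_pos. }
  assert (Hs2 : s < del) by (unfold s; pose proof (Rmin_l (Rmin del d) (l/2)); pose proof (Rmin_l del d); pose proof (cond_pos del); lra).
  assert (Hs3 : s < d) by (unfold s; pose proof (Rmin_l (Rmin del d) (l/2)); pose proof (Rmin_r del d); lra).
  assert (Hs4 : s <= l/4) by (unfold s; pose proof (Rmin_r (Rmin del d) (l/2)); lra).
  unfold Icc in Hx.
  destruct (Rlt_le_dec x0 (l/2)) as [Hlt|Hge].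
  - exists (x0 + s). assert (Ht : Rabs (x0 + s - x0) < d /\ Rabs (x0 + s - x0) < del).
    { replace (x0 + s - x0) with s by ring. rewrite Rabs_pos_eq by lra. lra. }
    split; [lra|]. split; [tauto|].
    specialize (Hdel (x0 + s)). 
    assert (B : ball x0 del (x0 + s)) by (unfold ball; simpl; unfold AbsRing_ball, abs, minus, plus, opp; simpl; tauto).
    specialize (Hdel B). assert (I : Icc l (x0 + s)) by (unfold Icc; lra).
    specialize (Hdel I). revert Hdel; unfold ball; simpl; unfold AbsRing_ball, abs, minus, plus, opp; simpl; auto.
  - exists (x0 - s). assert (Ht : Rabs (x0 - s - x0) < d /\ Rabs (x0 - s - x0) < del).
    { replace (x0 - s - x0) with (- s) by ring. rewrite Rabs_Ropp, Rabs_pos_eq by lra. lra. }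
    split; [lra|]. split; [tauto|].
    specialize (Hdel (x0 - s)). 
    assert (B : ball x0 del (x0 - s)) by (unfold ball; simpl; unfold AbsRing_ball, abs, minus, plus, opp; simpl; tauto).
    specialize (Hdel B). assert (I : Icc l (x0 - s)) by (unfold Icc; lra).
    specialize (Hdel I). revert Hdel; unfold ball; simpl; unfold AbsRing_ball, abs, minus, plus, opp; simpl; auto.
Qed.
Lemma part1 a (ve : R -> R) x lam : 0 < a -> a < ve x < 2 * a -> 0 <= Re lam ->
  0 < Re (fdenom a ve x lam) /\ 0 < Re (fval a ve x lam).
Proof.
  intros ha hv hp. destruct lam as [p q]. simpl in hp.
  set (v := ve x) in *.
  assert (hc : 1 < 2 * a / v).
  { apply (Rmult_lt_reg_r v); [lra|]. unfold Rdiv. rewrite Rmult_assoc, Rinv_l by lra. lra. }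
  set (c := 2 * a / v) in *.
  unfold fval, fdenom. fold v c.
  unfold Cdiv, Cmult, Cplus, Cminus, Copp, Cinv, RtoC, Re, Im; simpl.
  set (dr := p + - (1) + c). set (di := q + - 0 + 0).
  assert (Hdr : 0 < dr) by (unfold dr; lra).
  split; [exact Hdr|].
  assert (Hn : 0 < dr * dr + di * di) by nra.
  set (n := dr * dr + di * di) in *.
  unfold Rdiv.
  match goal with |- 0 < ?X => assert (E : X = v*v*((p+1)*dr + q*di) / n + p) end.
  { replace (dr*(dr*1)+di*(di*1)) with n by (unfold n; ring). field. lra. }
  rewrite E. unfold di.
  assert (0 < v * v * ((p + 1) * dr + q * (q + - 0 + 0))).
  { apply Rmult_lt_0_compat; [nra|]. unfold dr; nra. }
  assert (0 < v * v * ((p + 1) * dr + q * (q + - 0 + 0)) / n) by (apply Rdiv_lt_0_compat; lra).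
  lra.
Qed.

Lemma der_fst (f : R -> Complex.C) x l :
  is_derive (K:=R_AbsRing) f x l -> is_derive (fun t => fst (f t)) x (fst l).
Proof.
  intros H. unfold is_derive in *.
  eapply filterdiff_ext_lin.
  eapply (filterdiff_comp' f (fun z : Complex.C => fst z) x _ (fun z : Complex.C => fst z) H).
  apply (@filterdiff_linear R_AbsRing C_R_NormedModule R_NormedModule).
  apply (@is_linear_fst R_AbsRing R_NormedModule R_NormedModule).
  intros y. simpl. reflexivity.
Qed.
Lemma der_snd (f : R -> Complex.C) x l :
  is_derive (K:=R_AbsRing) f x l -> is_derive (fun t => snd (f t)) x (snd l).
Proof.
  intros H. unfold is_derive in *.
  eapply filterdiff_ext_lin.
  eapply (filterdiff_comp' f (fun z : Complex.C => snd z) x _ (fun z : Complex.C => snd z) H).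
  apply (@filterdiff_linear R_AbsRing C_R_NormedModule R_NormedModule).
  apply (@is_linear_snd R_AbsRing R_NormedModule R_NormedModule).
  intros y. simpl. reflexivity.
Qed.

Lemma lim0 (h : R -> R) l x0 : 0 < l -> Icc l x0 ->
  filterlim h (within (Icc l) (locally x0)) (locally (h x0)) ->
  (forall t, 0 < t < l -> h t = 0) -> h x0 = 0.
Proof.
  intros H H0 H1 H2. destruct (Req_dec (h x0) 0) as [|Hn]; auto.
  destruct (approx h l x0 H H0 H1 (Rabs (h x0)) 1) as [t [Ht [_ Hh]]];
    [apply Rabs_pos_lt; auto| lra|].
  rewrite H2 in Hh by auto. rewrite Rminus_0_l, Rabs_Ropp in Hh. lra.
Qed.

Theorem mainTheorem9 (a DL l : R) (ve : R -> R)
  (ha : 0 < a) (hDL : 0 < DL) (hl : 0 < l)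
  (hve_cont : cont_on_Icc l ve)
  (hve_bd : forall x, Icc l x -> a < ve x < 2 * a)
  (lam : Complex.C) (hlam : 0 <= Re lam) :
  (forall x, Icc l x ->
     fdenom a ve x lam <> RtoC 0 /\ 0 < Re (fval a ve x lam))
  /\
  (forall eta eta' eta'' : R -> Complex.C,
     cont_on_Icc l eta ->
     (forall x, 0 < x < l -> is_derive (K := R_AbsRing) eta x (eta' x)) ->
     cont_on_Icc l eta' ->
     (forall x, 0 < x < l -> is_derive (K := R_AbsRing) eta' x (eta'' x)) ->
     (forall x, 0 < x < l -> continuous eta'' x) ->
     (forall x, 0 < x < l ->
        (RtoC DL * eta'' x - fval a ve x lam * eta x)%C = RtoC 0) ->
     eta 0 = RtoC 0 ->
     eta' l = RtoC 0 ->
     (forall x, Icc l x -> eta x = RtoC 0) /\ eta' 0 = RtoC 0).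
Proof.
  assert (P1 : forall x, Icc l x -> fdenom a ve x lam <> RtoC 0 /\ 0 < Re (fval a ve x lam)).
  { intros x Hx. destruct (part1 a ve x lam ha (hve_bd x Hx) hlam) as [H1 H2].
    split; [|exact H2]. intros H. rewrite H in H1. simpl in H1. lra. }
  split; [exact P1|].
  intros eta eta' eta'' Hc Hd Hc' Hd' Hc'' Hode H0 Hl.
  set (u := fun t => fst (eta t)). set (w := fun t => snd (eta t)).
  set (u1 := fun t => fst (eta' t)). set (w1 := fun t => snd (eta' t)).
  set (u2 := fun t => fst (eta'' t)). set (w2 := fun t => snd (eta'' t)).
  set (E := fun t => u1 t * u t + w1 t * w t).
  set (g := fun t => u2 t * u t + u1 t * u1 t + (w2 t * w t + w1 t * w1 t)).
  assert (HdE : forall x, 0 < x < l -> is_derive E x (g x)).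
  { intros x Hx.
    pose proof (der_fst _ _ _ (Hd x Hx)) as Du. pose proof (der_snd _ _ _ (Hd x Hx)) as Dw.
    pose proof (der_fst _ _ _ (Hd' x Hx)) as Du1. pose proof (der_snd _ _ _ (Hd' x Hx)) as Dw1.
    pose proof (is_derive_mult _ _ x _ _ Du1 Du Rmult_comm) as M1.
    pose proof (is_derive_mult _ _ x _ _ Dw1 Dw Rmult_comm) as M2.
    pose proof (is_derive_plus _ _ x _ _ M1 M2) as S.
    exact S. }
  assert (Hg : forall x, 0 < x < l ->
     DL * g x = Re (fval a ve x lam) * (u x * u x + w x * w x) + DL * (u1 x * u1 x + w1 x * w1 x)).
  { intros x Hx. pose proof (Hode x Hx) as O.
    destruct (fval a ve x lam) as [fr fi].
    pose proof (f_equal fst O) as O1. pose proof (f_equal snd O) as O2.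
    clear O. unfold Cminus, Cmult, Copp, Cplus, RtoC in O1, O2. simpl in O1, O2.
    unfold g, u, w, u1, w1, u2, w2. unfold Re.
    simpl in O1, O2 |- *.
    replace (DL * (fst (eta'' x) * fst (eta x) + fst (eta' x) * fst (eta' x) +
      (snd (eta'' x) * snd (eta x) + snd (eta' x) * snd (eta' x))))
     with ((DL * fst (eta'' x)) * fst (eta x) + (DL * snd (eta'' x)) * snd (eta x)
       + DL * (fst (eta' x) * fst (eta' x) + snd (eta' x) * snd (eta' x))) by ring.
    replace (DL * fst (eta'' x)) with (fr * fst (eta x) - fi * snd (eta x)) by lra.
    replace (DL * snd (eta'' x)) with (fr * snd (eta x) + fi * fst (eta x)) by lra.
    ring. }
  assert (Hfr : forall x, 0 < x < l -> 0 < Re (fval a ve x lam)).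
  { intros x Hx. apply P1. unfold Icc; lra. }
  assert (Hgpos : forall x, 0 < x < l -> 0 <= g x).
  { intros x Hx. pose proof (Hg x Hx). pose proof (Hfr x Hx).
    assert (0 <= DL * g x) by nra. nra. }
  assert (Mono : forall x y, 0 < x -> x <= y -> y < l -> E x <= E y).
  { intros x y Hx Hxy Hy.
    destruct (MVT_gen E x y g) as [c [Hc1 Heq]].
    - rewrite Rmin_left, Rmax_right by lra. intros z Hz. apply HdE. lra.
    - rewrite Rmin_left, Rmax_right by lra. intros z Hz.
      apply continuity_pt_filterlim. apply (@ex_derive_continuous R_AbsRing R_NormedModule E z). exists (g z). apply HdE. lra.
    - rewrite Rmin_left, Rmax_right in Hc1 by lra.
      assert (0 <= g c) by (apply Hgpos; lra). nra. }
  assert (CE : forall x, Icc l x -> filterlim E (within (Icc l) (locally x)) (locally (E x))).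
  { intros x Hx. unfold E.
    apply lim_plus; [apply within_filter; apply locally_filter| |];
    apply lim_mult; try (apply within_filter; apply locally_filter);
    first [apply lim_fst | apply lim_snd]; try (apply within_filter; apply locally_filter);
    first [apply Hc' | apply Hc]; exact Hx. }
  assert (E0 : E 0 = 0) by (unfold E, u, w; rewrite H0; simpl; ring).
  assert (El : E l = 0) by (unfold E, u1, w1; rewrite Hl; simpl; ring).
  assert (Ezero : forall y, 0 < y < l -> E y = 0).
  { intros y Hy. apply Rle_antisym.
    - destruct (Rle_dec (E y) 0) as [|Hn]; auto. exfalso.
      assert (Il : Icc l l) by (unfold Icc; lra).
      destruct (approx E l l hl Il (CE l Il) (E y - E l) (l - y)) as [t [Ht [Ht2 He]]]; try lra.
      apply Rabs_def2 in Ht2. apply Rabs_def2 in He.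
      pose proof (Mono y t ltac:(lra) ltac:(lra) ltac:(lra)). lra.
    - destruct (Rle_dec 0 (E y)) as [|Hn]; auto. exfalso.
      assert (I0 : Icc l 0) by (unfold Icc; lra).
      destruct (approx E l 0 hl I0 (CE 0 I0) (E 0 - E y) y) as [t [Ht [Ht2 He]]]; try lra.
      apply Rabs_def2 in Ht2. apply Rabs_def2 in He.
      pose proof (Mono t y ltac:(lra) ltac:(lra) ltac:(lra)). lra. }
  assert (gzero : forall x, 0 < x < l -> g x = 0).
  { intros x Hx.
    assert (D0 : is_derive E x 0).
    { apply is_derive_ext_loc with (f := fun _ => 0); [|exact (@is_derive_const R_AbsRing R_NormedModule 0 x)].
      assert (Hp : 0 < Rmin x (l - x)) by (apply Rmin_glb_lt; lra).
      exists (mkposreal _ Hp). intros t Ht.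
      change (Rabs (t - x) < Rmin x (l - x)) in Ht.
      apply Rabs_def2 in Ht. pose proof (Rmin_l x (l - x)). pose proof (Rmin_r x (l - x)).
      symmetry. apply Ezero. lra. }
    rewrite <- (is_derive_unique _ _ _ (HdE x Hx)). apply is_derive_unique. exact D0. }
  assert (All : forall x, 0 < x < l -> u x = 0 /\ w x = 0 /\ u1 x = 0 /\ w1 x = 0).
  { intros x Hx. pose proof (Hg x Hx) as G. rewrite (gzero x Hx) in G.
    pose proof (Hfr x Hx).
    assert (u x * u x = 0) by nra. assert (w x * w x = 0) by nra.
    assert (u1 x * u1 x = 0) by nra. assert (w1 x * w1 x = 0) by nra.
    repeat split; nra. }
  split.
  - intros x Hx. apply injective_projections; simpl.
    + apply (lim0 u l x hl Hx); [apply lim_fst; [apply within_filter; apply locally_filter|apply Hc; exact Hx]|].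
      intros t Ht. apply All; exact Ht.
    + apply (lim0 w l x hl Hx); [apply lim_snd; [apply within_filter; apply locally_filter|apply Hc; exact Hx]|].
      intros t Ht. apply All; exact Ht.
  - assert (I0 : Icc l 0) by (unfold Icc; lra).
    apply injective_projections; simpl.
    + apply (lim0 u1 l 0 hl I0); [apply lim_fst; [apply within_filter; apply locally_filter|apply Hc'; exact I0]|].
      intros t Ht. apply All; exact Ht.
    + apply (lim0 w1 l 0 hl I0); [apply lim_snd; [apply within_filter; apply locally_filter|apply Hc'; exact I0]|].
      intros t Ht. apply All; exact Ht.
Qed.
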